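(* Let $N\ge1$, $1\le S\le N$, $L$ a band-width vector, $\dot W$ an $L$-admissible matrix, $W_\varepsilon=\mathrm{Id}+\varepsilon\dot W$, $\beta\in\Gamma$, $\alpha$ the $S$-banded vector with band vector $\beta$ and band-width vector $L$, $\mathcal P_\varepsilon$ the associated transfer operator, and $k\in\mathbb Z$. Assume $S=1$ or $k=0$. Let $\{f^{(1)}_k,\dots,f^{(N)}_k\}$ be an orthonormal eigenbasis of $e^{-2\pi ik\beta_1}\dot W$ with corresponding eigenvalues $\hat\lambda^{(1)}_k,\dots,\hat\lambda^{(N)}_k$. Then for every $\varepsilon>0$ and every $\ell$, $F^{(\ell)}_k(j,x)=f^{(\ell)}_k(j)e^{2\pi ikx}$ is an eigenfunction of $\mathcal P_\varepsilon$ with eigenvalue $\lambda^{(\ell)}_{k,\varepsilon}=e^{-2\pi ik\beta_1}+\varepsilon\hat\lambda^{(\ell)}_k$, and these are (up to scalar multiples) all eigenfunctions of $\mathcal P_\varepsilon$ of the form $f(j)e^{2\pi ikx}$. In particular, the $L^2(M)$-orthogonal projection $\Pi^{(\ell)}_{k,\varepsilon}$ onto the eigenfunction with eigenvalue $\lambda^{(\ell)}_{k,\varepsilon}$ equals, for every $\varepsilon>0$, the $L^2(M)$-orthogonal projection $\Pi^{(\ell)}_k$ onto $\operatorname{span}\{F^{(\ell)}_k\}$.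
   Context: $\mathbb S^1=\mathbb R/\mathbb Z$, $M=\{1,\dots,N\}\times\mathbb S^1$ with the product of the uniform probability and Lebesgue measure; $L^2(M)$ complex. For $\alpha\in\mathbb R^N$, $(\mathcal P_\varepsilon F)(j,x)=\sum_{j'=1}^N(W_\varepsilon)_{jj'}F(j',x-\alpha_j)$. A band-width vector is $L=(L_1,\dots,L_S)$ of positive integers with $\sum_sL_s=N$; $N_0=0$, $N_s=N_{s-1}+L_s$, $B_s=\{j:N_{s-1}<j\le N_s\}$; for distinct reals $\beta_1,\dots,\beta_S$ the $S$-banded vector $\alpha$ has $\alpha_j=\beta_s$ for $j\in B_s$. $\dot W$ is $L$-admissible if it is real symmetric and (1) $\dot W_{ij}\ge0$ for $i\ne j$, $\sum_j\dot W_{ij}=0$ for all $i$; (2) $\dot W$ has $N$ distinct eigenvalues; (3) each $\hat W_s=(\dot W_{jk})_{j,k\in B_s}$ has $L_s$ distinct eigenvalues. $\Gamma=\{\beta\in\mathbb R^S: e^{-2\pi ik\beta_{s_1}}\neq e^{-2\pi ik\beta_{s_2}}\text{ for all }k\ne0,\ s_1\ne s_2\}$. *)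

(* Defs.v *)
From mathcomp Require Import all_boot all_order all_algebra.
From mathcomp Require Import all_classical all_reals all_analysis.
From mathcomp.real_closed Require Import complex.
Set Implicit Arguments.
Unset Strict Implicit.
Unset Printing Implicit Defensive.
Import Order.TTheory GRing.Theory Num.Theory.
Local Open Scope ring_scope.
Local Open Scope complex_scope.

Section Defs.
Variable R : realType.

Definition tr_expi (t : R) : R[i] := (cos t) +i* (sin t).

Definition tr_e2pi (k : int) (x : R) : R[i] := tr_expi (2 * pi * k%:~R * x).

Definition tr_phase (k : int) (b : R) : R[i] := tr_expi (- (2 * pi * k%:~R * b)).

(* L = (L_1,...,L_S) is encoded as a seq nat of size S.  *)
Definition tr_band_width_vector (N : nat) (L : seq nat) : bool :=
  all (fun l => (0 < l)%N) L && (sumn L == N).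

(* N_{s} (0-based: tr_band s starts at sumn of the first s widths) *)
Definition tr_band_start (L : seq nat) (s : nat) : nat := sumn (take s L).

Definition tr_in_band (L : seq nat) (s j : nat) : bool :=
  (tr_band_start L s <= j < tr_band_start L s + nth 0%N L s)%N.

Definition tr_band (N : nat) (L : seq nat) (s : nat) : {set 'I_N} :=
  [set j : 'I_N | tr_in_band L s j].

Definition tr_banded_vector (N : nat) (L : seq nat) (beta : seq R)
  (alpha : 'I_N -> R) : Prop :=
  forall s, (s < size L)%N -> forall j : 'I_N, tr_in_band L s j ->
    alpha j = nth 0 beta s.

Definition tr_diag_block (N : nat) (L : seq nat) (Wd : 'M[R]_N) (s : nat)
  : 'M[R]_#|tr_band N L s| :=
  \matrix_(a, b) Wd (enum_val a) (enum_val b).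

(* A (n x n) has (at least, hence exactly when m = n) m distinct eigenvalues *)
Definition tr_has_distinct_eigenvalues (n : nat) (A : 'M[R]_n) (m : nat) : Prop :=
  exists s : seq R, [/\ size s = m, uniq s & all (eigenvalue A) s].

Definition tr_admissible (N : nat) (L : seq nat) (Wd : 'M[R]_N) : Prop :=
  [/\ Wd^T = Wd,
      (forall i j : 'I_N, i != j -> 0 <= Wd i j),
      (forall i : 'I_N, \sum_(j < N) Wd i j = 0),
      tr_has_distinct_eigenvalues Wd N &
      (forall s, (s < size L)%N ->
         tr_has_distinct_eigenvalues (tr_diag_block L Wd s) (nth 0%N L s))].

Definition tr_in_Gamma (beta : seq R) : Prop :=
  forall k : int, k != 0 ->
  forall s1 s2 : nat, (s1 < size beta)%N -> (s2 < size beta)%N -> s1 != s2 ->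
    tr_phase k (nth 0 beta s1) != tr_phase k (nth 0 beta s2).

(* functions on S^1 = R/Z are represented as functions on R *)
Definition tr_fun_M (N : nat) := 'I_N -> R -> R[i].

Definition tr_transfer (N : nat) (Wd : 'M[R]_N) (alpha : 'I_N -> R) (eps : R)
  (F : tr_fun_M N) : tr_fun_M N :=
  fun j x => \sum_(j' < N) ((1%:M + eps *: Wd) j j')%:C * F j' (x - alpha j).

Definition tr_is_eigenfunction (N : nat) (P : tr_fun_M N -> tr_fun_M N)
  (F : tr_fun_M N) (lam : R[i]) : Prop :=
  (exists j x, F j x != 0) /\ (forall j x, P F j x = lam * F j x).

Definition tr_mode (N : nat) (f : 'cV[R[i]]_N) (k : int) : tr_fun_M N :=
  fun j x => f j 0 * tr_e2pi k x.

(* integral over S^1 (identified with [0,1], Lebesgue measure) of a complex function *)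
Definition tr_cint01 (h : R -> R[i]) : R[i] :=
  (Rintegral lebesgue_measure `[0, 1] (fun x => complex.Re (h x))) +i*
  (Rintegral lebesgue_measure `[0, 1] (fun x => complex.Im (h x))).

(* L^2(M) inner product (uniform probability on {1..N} times Lebesgue) *)
Definition tr_inner_M (N : nat) (F G : tr_fun_M N) : R[i] :=
  (N%:R^-1)%:C * \sum_(j < N) tr_cint01 (fun x => F j x * (G j x)^*).

Definition tr_proj_span (N : nat) (F : tr_fun_M N) (H : tr_fun_M N) : tr_fun_M N :=
  fun j x => (tr_inner_M H F / tr_inner_M F F) * F j x.

(* H is (Lebesgue) integrable on M; this contains L^2(M) *)
Definition tr_integrable_M (N : nat) (H : tr_fun_M N) : Prop :=
  forall j : 'I_N,
    lebesgue_measure.-integrable `[0, 1] (fun x => (complex.Re (H j x))%:E) /\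
    lebesgue_measure.-integrable `[0, 1] (fun x => (complex.Im (H j x))%:E).

Definition tr_orthonormal (N : nat) (f : 'I_N -> 'cV[R[i]]_N) : Prop :=
  forall l m : 'I_N, \sum_(j < N) f l j 0 * (f m j 0)^* = (l == m)%:R.

End Defs.

(* Main.v *)
Require Import Defs.
From mathcomp Require Import all_boot all_order all_algebra.
From mathcomp Require Import all_classical all_reals all_analysis.
From mathcomp.real_closed Require Import complex.
From mathcomp Require Import measurable_realfun ring lra zify.
Import Order.TTheory GRing.Theory Num.Theory.
Import numFieldNormedType.Exports.
Local Open Scope ring_scope.
Local Open Scope complex_scope.
Section H.
Variable R : realType.
Lemma cmulE0 (a b c d : R) : (a +i* b) * (c +i* d) = (a * c - b * d) +i* (a * d + b * c).
Proof. by []. Qed.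
Lemma expiD (a b : R) : tr_expi (a + b) = tr_expi a * tr_expi b.
Proof. rewrite /tr_expi cosD sinD cmulE0; congr (_ +i* _); ring. Qed.
Lemma expi0 : tr_expi (0:R) = 1.
Proof. by rewrite /tr_expi cos0 sin0. Qed.
Lemma expi_neq0 (t : R) : tr_expi t != 0.
Proof.
apply/negP => /eqP h; have := expiD t (-t); rewrite subrr expi0 h mul0r.
by move/eqP; rewrite oner_eq0.
Qed.
Lemma e2pi_shift (k : int) (x a : R) : tr_e2pi k (x - a) = tr_phase k a * tr_e2pi k x.
Proof. by rewrite /tr_e2pi /tr_phase -expiD; congr tr_expi; ring. Qed.
Lemma e2pi0 (k : int) : tr_e2pi k (0:R) = 1.
Proof. by rewrite /tr_e2pi mulr0 expi0. Qed.
Lemma phase0 (b : R) : tr_phase 0 b = 1 :> R[i].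
Proof. by rewrite /tr_phase mulr0 mul0r oppr0 expi0. Qed.
Lemma phase_neq0 k (b : R) : tr_phase k b != 0.
Proof. exact: expi_neq0. Qed.
Lemma phase_alpha N S (L : seq nat) (beta : seq R) (alpha : 'I_N -> R) k :
  (S = 1%N \/ k = 0) -> size L = S -> tr_band_width_vector N L ->
  tr_banded_vector L beta alpha ->
  forall j : 'I_N, tr_phase k (alpha j) = tr_phase k (nth 0 beta 0).
Proof.
move=> [-> | ->] hL hw hb j; last by rewrite !phase0.
case: L hL hw hb => [|n [|]] //= _ /andP[_ /eqP hn] hb.
rewrite (hb 0%N) // /tr_in_band /tr_band_start /= add0n.
have -> : n = N by rewrite -hn /= addn0.
exact: ltn_ord.

Qed.

Lemma transfer_mode N (Wd : 'M[R]_N) alpha eps (g : 'cV[R[i]]_N) k p :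
  (forall j, tr_phase k (alpha j) = p) -> forall j x,
  tr_transfer Wd alpha eps (tr_mode g k) j x =
  p * ((g + eps%:C *: (map_mx (real_complex R) Wd *m g)) j 0) * tr_e2pi k x.
Proof.
move=> hp j x; rewrite /tr_transfer /tr_mode.
under eq_bigr do rewrite e2pi_shift hp mulrA.
rewrite -big_distrl /= mulrCA mulrA; congr (_ * _ * _).
rewrite scalemxAl (_ : forall A : 'M[R[i]]_N, g + A *m g = (1%:M + A) *m g) ?mxE; last by move=> A; rewrite mulmxDl mul1mx.
apply: eq_bigr => i _; rewrite !mxE.
rewrite rmorphD rmorphM /=; congr (_ * _); congr (_ + _).
by case: (j == i).
Qed.
End H.

Section LA.
Variables (F : fieldType) (n : nat) (A : 'M[F]_n).

Lemma eig_rank_sum (I : finType) (a : I -> F) : injective a ->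
  (\sum_(i : I) \rank (eigenspace A (a i)) <= n)%N.
Proof.
move=> ia; have := @mxdirect_sum_eigenspace F I n A predT a.
rewrite mxdirectE /= => /(_ (in2W ia)) /eqP <-; exact: rank_leq_col.
Qed.

Lemma eig_card (I : finType) (a : I -> F) : injective a ->
  (forall i, eigenvalue A (a i)) -> (#|I| <= n)%N.
Proof.
move=> ia ea; apply: (leq_trans _ (@eig_rank_sum I a ia)).
rewrite -sum1_card; apply: leq_sum => i _.
by rewrite lt0n mxrank_eq0; exact: ea.
Qed.

Lemma eig_in (t : 'I_n -> F) : injective t -> (forall i, eigenvalue A (t i)) ->
  forall z, eigenvalue A z -> exists i, z = t i.
Proof.
move=> it et z ez; case: (pickP (fun i => z == t i)) => [i /eqP -> | H].
  by exists i.
pose a (o : option 'I_n) := if o is Some i then t i else z.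
have ia : injective a.
  move=> [i|] [j|] //= h; first by rewrite (it _ _ h).
  - by move: (H i); rewrite h eqxx.
  - by move: (H j); rewrite h eqxx.
have h : (#|{: option 'I_n}| <= n)%N.
  by apply: (@eig_card _ a ia) => -[i|] /=; [exact: et | exact: ez].
by rewrite card_option card_ord ltnn in h.
Qed.
Lemma eig_rank1 (t : 'I_n -> F) : injective t -> (forall i, eigenvalue A (t i)) ->
  forall i, \rank (eigenspace A (t i)) = 1%N.
Proof.
move=> it et i; have hs := @eig_rank_sum _ t it.
have pos : (0 < \rank (eigenspace A (t i)))%N by rewrite lt0n mxrank_eq0; exact: et.
rewrite (bigD1 i) //= in hs.
have : (#|[pred j | j != i]| <= \sum_(j | j != i) \rank (eigenspace A (t j)))%N.
  rewrite -sum1_card; apply: leq_sum => j _.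
  by rewrite lt0n mxrank_eq0; exact: et.
have : #|[pred j | j != i]| = n.-1 by rewrite cardC1 card_ord.
move=> -> h2.
have n0 : (0 < n)%N by apply: leq_ltn_trans (ltn_ord i).
move: hs h2 pos n0; set r := \rank _; set s := \sum_(j | _) _; lia.
Qed.

Lemma rank1_prop m (E : 'M[F]_(m, n)) (v w : 'rV[F]_n) : \rank E = 1%N ->
  (v <= E)%MS -> (w <= E)%MS -> v != 0 -> exists c, w = c *: v.
Proof.
move=> rE vE wE v0.
have : (v == E)%MS.
  have := mxrank_leqif_eq vE; rewrite rank_rV v0 rE /= => h.
  by rewrite -(geq_leqif h) leqnn.
move=> /eqmxP eq; apply/sub_rVP; apply: (submx_trans wE); by rewrite eq.
Qed.
End LA.

Local Open Scope classical_set_scope.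
Section I.
Variable R : realType.
Local Notation mu := (@lebesgue_measure R).
Local Notation D := (`[(0:R), 1] : set R).

Lemma cmulE (a b c d : R) : (a +i* b) * (c +i* d) = (a * c - b * d) +i* (a * d + b * c).
Proof. by []. Qed.

Lemma mD : @measurable _ (measurableTypeR R) D. Proof. exact: measurable_itv. Qed.

Lemma intZ (a : R) (f : R -> R) : mu.-integrable D (fun x => (f x)%:E) ->
  mu.-integrable D (EFin \o (fun x => a * f x)).
Proof. move=> i; apply: (eq_integrable mD _ _ _ (integrableZl mD a i)) => x _ /=; by rewrite EFinM. Qed.

Lemma cint01_scal (c : R[i]) (h : R -> R[i]) :
  mu.-integrable D (fun x => (complex.Re (h x))%:E) ->
  mu.-integrable D (fun x => (complex.Im (h x))%:E) ->
  tr_cint01 (fun x => c * h x) = c * tr_cint01 h.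
Proof.
move=> iR iI; case: c => a b; rewrite /tr_cint01 cmulE.
have eR : (fun x => complex.Re ((a +i* b) * h x)) = (fun x => a * complex.Re (h x) - b * complex.Im (h x)).
  by apply/funext => x; case: (h x).
have eI : (fun x => complex.Im ((a +i* b) * h x)) = (fun x => a * complex.Im (h x) + b * complex.Re (h x)).
  by apply/funext => x; case: (h x).
rewrite eR eI RintegralB ?RintegralD ?RintegralZl //; try exact: mD; exact: intZ.
Qed.
Lemma ccos (a c d : R) : continuous (fun x : R => c * cos (a * x) + d * sin (a * x)).
Proof.
move=> x; apply: cvgD; apply: cvgM; try exact: cvg_cst.
- apply: continuous_comp; last exact: continuous_cos. apply: cvgM; [exact: cvg_cst| exact: cvg_id].
- apply: continuous_comp; last exact: continuous_sin. apply: cvgM; [exact: cvg_cst| exact: cvg_id].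
Qed.
Lemma mcos (a c d : R) : measurable_fun (T := measurableTypeR R) D (fun x : R => c * cos (a * x) + d * sin (a * x)).
Proof. apply: measurable_funTS. exact: continuous_measurable_fun (ccos a c d). Qed.
Lemma bcos (a c d : R) : [bounded c * cos (a * x) + d * sin (a * x) | x in D].
Proof.
exists (`|c| + `|d|); split; first exact: num_real.
move=> M hM x _; apply: le_trans (ltW hM).
apply: le_trans (ler_normD _ _) _; rewrite !normrM lerD //.
  by rewrite -[leRHS]mulr1 ler_wpM2l // cos_max.
by rewrite -[leRHS]mulr1 ler_wpM2l // sin_max.
Qed.
Lemma intMc (u : R -> R) (a c d : R) : mu.-integrable D (fun x => (u x)%:E) ->
  mu.-integrable D (EFin \o (fun x => u x * (c * cos (a * x) + d * sin (a * x)))).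
Proof.
move=> iu; apply: (eq_integrable mD _ _ _ (integrableMl mD iu (mcos a c d) (bcos a c d))).
by move=> x _ /=; rewrite EFinM.
Qed.
Lemma intHG (H : R -> R[i]) (c : R[i]) (a : R) :
  mu.-integrable D (fun x => (complex.Re (H x))%:E) ->
  mu.-integrable D (fun x => (complex.Im (H x))%:E) ->
  mu.-integrable D (fun x => (complex.Re (H x * (c * tr_expi (a * x))))%:E) /\
  mu.-integrable D (fun x => (complex.Im (H x * (c * tr_expi (a * x))))%:E).
Proof.
move=> iR iI; case: c => cr ci; split.
- apply: (eq_integrable mD _ _ _ (integrableB mD (@intMc (fun x => complex.Re (H x)) a cr (- ci) iR) (@intMc (fun x => complex.Im (H x)) a ci cr iI))).
  move=> x _ /=; rewrite -EFinB; congr EFin; rewrite /tr_expi.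
  case: (H x) => hr hi; rewrite !cmulE /=; ring.
- apply: (eq_integrable mD _ _ _ (integrableD mD (@intMc (fun x => complex.Re (H x)) a ci cr iR) (@intMc (fun x => complex.Im (H x)) a cr (- ci) iI))).
  move=> x _ /=; rewrite -EFinD; congr EFin; rewrite /tr_expi.
  case: (H x) => hr hi; rewrite !cmulE /=; ring.
Qed.
Lemma icst (r : R) : mu.-integrable D (fun x => r%:E).
Proof.
apply: (measurable_bounded_integrable (f := cst r) mD).
- have h := lebesgue_measure_itv `[(0:R), 1]%R; move: h => /=; rewrite lte_fin ltr01 oppr0 adde0 => h.
  by rewrite (_ : mu _ = 1%:E) ?ltry. 
- exact: measurable_cst.
- exact: bounded_cst.
Qed.

Local Notation cj := (@Num.conj _).
Lemma conjM (a b : R[i]) : cj (a * b) = cj a * cj b.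
Proof. exact: rmorphM. Qed.

Lemma expiC (t : R) : cj (tr_expi t) = tr_expi (- t).
Proof. by rewrite /tr_expi cosN sinN. Qed.

Lemma modeZ N (v : 'cV[R[i]]_N) k (a : R[i]) :
  tr_mode (a *: v) k = fun j x => a * tr_mode v k j x.
Proof. by apply/funext => j; apply/funext => x; rewrite /tr_mode mxE mulrA. Qed.

Lemma modeC N (v : 'cV[R[i]]_N) k j x :
  cj (tr_mode v k j x) = cj (v j 0) * tr_expi (- (2 * pi * k%:~R) * x).
Proof. by rewrite /tr_mode /tr_e2pi conjM expiC mulNr. Qed.

Lemma inner_r N (H : tr_fun_M R N) (v : 'cV[R[i]]_N) k (a : R[i]) :
  tr_integrable_M H ->
  tr_inner_M H (fun j x => a * tr_mode v k j x) = cj a * tr_inner_M H (tr_mode v k).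
Proof.
move=> iH; rewrite /tr_inner_M [RHS]mulrCA [in RHS]big_distrr /=; congr (_ * _).
apply: eq_bigr => j _.
have -> : (fun x => H j x * cj (a * tr_mode v k j x)) = (fun x => cj a * (H j x * cj (tr_mode v k j x))).
  by apply/funext => x; rewrite conjM mulrCA.
have [i1 i2] := iH j.
have e : forall x, H j x * cj (tr_mode v k j x) = H j x * (cj (v j 0) * tr_expi (- (2 * pi * k%:~R) * x)).
  by move=> x; rewrite modeC.
have [h1 h2] := intHG (H j) (cj (v j 0)) (- (2 * pi * k%:~R)) i1 i2.
rewrite cint01_scal //; [apply: (eq_integrable mD _ _ _ h1) | apply: (eq_integrable mD _ _ _ h2)] => x _; by rewrite e.
Qed.

Lemma inner_aa N (v : 'cV[R[i]]_N) k (a : R[i]) :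
  tr_inner_M (fun j x => a * tr_mode v k j x) (fun j x => a * tr_mode v k j x) =
  (a * cj a) * tr_inner_M (tr_mode v k) (tr_mode v k).
Proof.
rewrite /tr_inner_M [RHS]mulrCA [in RHS]big_distrr /=; congr (_ * _).
apply: eq_bigr => j _.
have -> : (fun x => a * tr_mode v k j x * cj (a * tr_mode v k j x)) = (fun x => (a * cj a) * (tr_mode v k j x * cj (tr_mode v k j x))).
  by apply/funext => x; rewrite conjM mulrACA.
have e : forall x, tr_mode v k j x * cj (tr_mode v k j x) = (v j 0 * tr_expi (2 * pi * k%:~R * x)) * (cj (v j 0) * tr_expi (- (2 * pi * k%:~R) * x)).
  by move=> x; rewrite modeC.
have i1 : mu.-integrable D (fun x => (complex.Re (v j 0 * tr_expi (2 * pi * k%:~R * x)))%:E).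
  have := intHG (fun=> 1) (v j 0) (2 * pi * k%:~R) (icst 1) (icst 0).
  by case=> h1 _; apply: (eq_integrable mD _ _ _ h1) => x _ /=; rewrite mul1r.
have i2 : mu.-integrable D (fun x => (complex.Im (v j 0 * tr_expi (2 * pi * k%:~R * x)))%:E).
  have := intHG (fun=> 1) (v j 0) (2 * pi * k%:~R) (icst 1) (icst 0).
  by case=> _ h1; apply: (eq_integrable mD _ _ _ h1) => x _ /=; rewrite mul1r.
have [h1 h2] := intHG (fun x => v j 0 * tr_expi (2 * pi * k%:~R * x)) (cj (v j 0)) (- (2 * pi * k%:~R)) i1 i2.
rewrite cint01_scal //; [apply: (eq_integrable mD _ _ _ h1) | apply: (eq_integrable mD _ _ _ h2)] => x _; by rewrite e.
Qed.

Lemma proj_scale N (v : 'cV[R[i]]_N) k (a : R[i]) (H : tr_fun_M R N) :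
  a != 0 -> tr_integrable_M H -> forall j x,
  tr_proj_span (tr_mode (a *: v) k) H j x = tr_proj_span (tr_mode v k) H j x.
Proof.
move=> a0 iH j x; rewrite /tr_proj_span modeZ inner_r // inner_aa.
set X := tr_inner_M H _; set Y := tr_inner_M _ _; set g := tr_mode v k j x.
have ac : cj a != 0 by rewrite conjC_eq0.
clearbody X Y g; move: (cj a) ac => b ac.
rewrite !invfM; transitivity ((b / b) * (a / a) * (X / Y * g)); first ring.
by rewrite !divff // !mul1r.
Qed.
End I.

Local Close Scope classical_set_scope.

Lemma col_nz (R : realType) N (v : 'cV[R[i]]_N) : v != 0 -> exists j, v j 0 != 0.
Proof.
move=> v0; case: (pickP (fun j => v j 0 != 0)) => [j hj | H]; first by exists j.
exfalso; move/negP: v0; apply; apply/eqP/matrixP => i c; rewrite ord1 mxE.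
by move: (H i) => /negbFE/eqP.
Qed.

Theorem proposition3p7 (R : realType) (N S : nat) (L : seq nat)
  (Wd : 'M[R]_N) (beta : seq R) (alpha : 'I_N -> R) (k : int)
  (f : 'I_N -> 'cV[R[i]]_N) (lamh : 'I_N -> R[i]) :
  (1 <= N)%N -> (1 <= S <= N)%N ->
  size L = S -> tr_band_width_vector N L -> tr_admissible L Wd ->
  size beta = S -> tr_in_Gamma beta -> tr_banded_vector L beta alpha ->
  (S = 1%N \/ k = 0) ->
  tr_orthonormal f ->
  (forall l : 'I_N,
     (tr_phase k (nth 0 beta 0) *: map_mx (real_complex R) Wd) *m f l
       = lamh l *: f l) ->
  forall eps : R, 0 < eps ->
  [/\ (* each F^(l)_k is an eigenfunction with eigenvalue lambda^(l)_{k,eps} *)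
      (forall l : 'I_N,
         tr_is_eigenfunction (tr_transfer Wd alpha eps) (tr_mode (f l) k)
           (tr_phase k (nth 0 beta 0) + eps%:C * lamh l)),
      (* up to scalars, these are all eigenfunctions of the form f(j) e^{2 pi i k x} *)
      (forall (g : 'cV[R[i]]_N) (mu : R[i]),
         tr_is_eigenfunction (tr_transfer Wd alpha eps) (tr_mode g k) mu ->
         exists (l : 'I_N) (a : R[i]),
           g = a *: f l /\ mu = tr_phase k (nth 0 beta 0) + eps%:C * lamh l) &
      (* the orthogonal projection onto the eigenfunction with eigenvalue
         lambda^(l)_{k,eps} equals the projection onto span{F^(l)_k} *)
      (forall (l : 'I_N) (g : 'cV[R[i]]_N),
         tr_is_eigenfunction (tr_transfer Wd alpha eps) (tr_mode g k)
           (tr_phase k (nth 0 beta 0) + eps%:C * lamh l) ->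
         forall H : tr_fun_M R N, tr_integrable_M H ->
         forall j x, tr_proj_span (tr_mode g k) H j x = tr_proj_span (tr_mode (f l) k) H j x)].
Proof.
move=> hN hS hL hw hadm hb hG hbd hk horth hf eps heps.
set p := tr_phase k (nth 0 beta 0).
have hpa : forall j, tr_phase k (alpha j) = p := phase_alpha _ _ _ _ _ _ _ hk hL hw hbd.
have p0 : p != 0 := phase_neq0 _ _ _.
have eps0 : eps%:C != 0 by rewrite eq_complex /= negb_and (gt_eqF heps).
set Wc := map_mx (real_complex R) Wd.
case: hadm => WdT _ _ [s [ss us es]] _.
have hT : Wc^T = Wc by rewrite /Wc map_trmx WdT.
have colev : forall z (v : 'cV[R[i]]_N), v != 0 -> Wc *m v = z *: v -> eigenvalue Wc z.
  move=> z v v0 hv; apply/eigenvalueP; exists v^T; last by rewrite trmx_eq0.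
  by rewrite -{1}hT -trmx_mul hv linearZ.
have colsub : forall z (v : 'cV[R[i]]_N), Wc *m v = z *: v -> (v^T <= eigenspace Wc z)%MS.
  move=> z v hv; apply/eigenspaceP; by rewrite -{1}hT -trmx_mul hv linearZ.
pose t (i : 'I_N) := (nth 0 s i)%:C.
have it : injective t.
  move=> i j /complexI hij; apply/val_inj/eqP.
  by rewrite -(nth_uniq 0 _ _ us) ?ss ?ltn_ord //; apply/eqP.
have et : forall i, eigenvalue Wc (t i).
  move=> i; have /eigenvalueP [u hu u0] : eigenvalue Wd (nth 0 s i).
    by apply: (allP es); rewrite mem_nth // ss.
  apply/eigenvalueP; exists (map_mx (real_complex R) u); last by rewrite map_mx_eq0.
  by rewrite -map_mxM hu map_mxZ.
have colprop : forall z (v w : 'cV[R[i]]_N), v != 0 -> Wc *m v = z *: v ->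
    Wc *m w = z *: w -> exists c, w = c *: v.
  move=> z v w v0 hv hw2.
  have [i hz] := @eig_in _ _ Wc t it et z (colev z v v0 hv).
  have r1 := @eig_rank1 _ _ Wc t it et i.
  rewrite hz in hv hw2.
  have [c hc] := @rank1_prop _ _ _ _ v^T w^T r1 (colsub _ _ hv) (colsub _ _ hw2) ltac:(by rewrite trmx_eq0).
  by exists c; apply: trmx_inj; rewrite hc linearZ.
have fnz : forall l, f l != 0.
  move=> l; apply/negP => /eqP h; have := horth l l; rewrite eqxx h => H.
  rewrite big1 in H; last by move=> j _; rewrite mxE mul0r.
  by move/eqP: H; rewrite eq_sym oner_eq0.
have heig : forall g mu, tr_is_eigenfunction (tr_transfer Wd alpha eps) (tr_mode g k) mu ->
    g != 0 /\ Wc *m g = ((mu - p) / (p * eps%:C)) *: g.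
  move=> g mu [[j0 [x0 hne]] he]; split.
    apply/negP => /eqP g0; move: hne; by rewrite /tr_mode g0 mxE mul0r eqxx.
  apply/matrixP => i c; rewrite ord1; have := he i 0.
  rewrite (transfer_mode _ _ _ _ _ _ _ _ hpa) /tr_mode e2pi0 !mulr1.
  rewrite mxE [X in _ * (_ + X)]mxE => h; rewrite [RHS]mxE.
  have pe0 : p * eps%:C != 0 by rewrite mulf_neq0.
  have h2 : (p * eps%:C) * (Wc *m g) i 0 = (mu - p) * g i 0.
    by rewrite mulrBl -h; ring.
  by rewrite -[LHS](mulKf pe0) h2 mulrA [_^-1 * _]mulrC.
pose lam l := lamh l / p.
have hfl : forall l, Wc *m f l = lam l *: f l.
  move=> l; have := hf l; rewrite -scalemxAl => h.
  by rewrite -[Wc *m f l](scalerK p0) h scalerA mulrC.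
have lam_inj : injective lam.
  move=> l m hlm.
  have [c hc] := colprop (lam l) (f l) (f m) (fnz l) (hfl l) ltac:(by rewrite hlm hfl).
  case: (eqVneq l m) => // hne; exfalso.
  have h1 := horth m l; have h2 := horth l l.
  rewrite eqxx in h2; rewrite eq_sym (negbTE hne) hc in h1.
  rewrite (eq_bigr (fun j => c * (f l j 0 * Num.conj (f l j 0)))) in h1; last first.
    by move=> j _; rewrite mxE mulrA.
  rewrite -big_distrr /= h2 mulr1 in h1.
  by move: (fnz m); rewrite hc h1 scale0r eqxx.
have lam_ev : forall l, eigenvalue Wc (lam l) := fun l => colev _ _ (fnz l) (hfl l).
split.
- move=> l; split.
    have [j hj] := @col_nz R N (f l) (fnz l); exists j, 0; by rewrite /tr_mode e2pi0 mulr1.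
  move=> j x; rewrite (transfer_mode _ _ _ _ _ _ _ _ hpa) /tr_mode mulrA; congr (_ * _).
  have hV : p *: (f l + eps%:C *: (Wc *m f l)) = (p + eps%:C * lamh l) *: f l.
    rewrite scalerDr scalerDl; congr (_ + _).
    have e1 : p *: (Wc *m f l) = lamh l *: f l by rewrite scalemxAl hf.
    by rewrite scalerA [p * _]mulrC -(scalerA eps%:C p) e1 scalerA.
  by have := congr1 (fun M : 'M[R[i]]_(N,1) => M j 0) hV; rewrite /= [LHS]mxE [RHS]mxE.
- move=> g mu hg; have [g0 hWg] := heig g mu hg.
  have [l hl] := @eig_in _ _ Wc lam lam_inj lam_ev _ (colev _ _ g0 hWg).
  rewrite hl in hWg.
  have [c hc] := colprop _ _ _ (fnz l) (hfl l) hWg.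
  exists l, c; split => //.
  have pe0 : p * eps%:C != 0 by rewrite mulf_neq0.
  have h : mu - p = eps%:C * lamh l.
    by rewrite -(divfK pe0 (mu - p)) hl /lam; field.
  by rewrite -h; ring.
- move=> l g hg H iH j x.
  have [g0 hWg] := heig g _ hg.
  have hnu : (p + eps%:C * lamh l - p) / (p * eps%:C) = lam l.
    by rewrite /lam [p + _]addrC addrK invfM [p^-1 * _]mulrC mulrA [eps%:C * _]mulrC mulfK.
  rewrite hnu in hWg.
  have [c hc] := colprop _ _ _ (fnz l) (hfl l) hWg.
  have c0 : c != 0 by apply: contra g0 => /eqP c0; rewrite hc c0 scale0r.
  by rewrite hc (proj_scale _ _ _ _ _ _ c0 iH).
Qed.
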